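(* Under Conditions 1 and 2, there exist constants $C>0$ and $n_0\ge1$ such that for every $k\in\mathbb Z_+$, every $\mathbf y=(y_1,\dots,y_k)\in\mathbb R_+^k$ and every $n\ge n_0$, $$\sup_{t\ge0}R^{(n)}_\beta(t,k,\mathbf y)\le C\sum_{j=1}^k(1+y_j).$$
   Context: Notation: $\mathbb Z_+=\{1,2,\dots\}$, $\mathbb R_+=[0,\infty)$. For each $n\ge1$: $\lambda^{(n)}>0$; a probability $\Lambda^{(n)}$ on $\mathbb R_+$ with tail $\bar\Lambda^{(n)}(t)=\Lambda^{(n)}((t,\infty))$, $\eta^{(n)}=\int_0^\infty y\Lambda^{(n)}(dy)$, $\sigma^{(n)}=\frac12\int_0^\infty y^2\Lambda^{(n)}(dy)$ finite; probability laws $(p_k^{(n)})_{k\ge1}$, $(q_k^{(n)})_{k\ge1}$ on $\mathbb Z_+$ with generating functions $g^{(n)},h^{(n)}$, $m^{(n)}=\sum_kkp_k^{(n)}<\infty$; $\gamma_n>0$ with $\gamma_n\to\infty$, $\gamma_n/n\to\gamma_*\in[0,\infty)$. $\phi^{(n)}(z)=n\gamma_n[g^{(n)}(1-z/n)-(1-z/n)]$, $\psi^{(n)}(z)=\gamma_n[1-h^{(n)}(1-z/n)]$ for $z\in[0,n]$. Condition 1: (i) $\lambda^{(n)}\to\lambda>0$, $\eta^{(n)}\to\eta>0$, $\sigma^{(n)}\to\sigma>0$, $\gamma_n(1-\lambda^{(n)}\eta^{(n)})\to b\in\mathbb R$; (ii) $\psi^{(n)}\to\psi$ uniformly on compacts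 of $[0,\infty)$; (iii) $\{\phi^{(n)}\}$ is uniformly Lipschitz on bounded intervals and converges uniformly on compacts to a continuous $\phi$. Under Condition 1, $\lambda\eta=1$ and $m:=\lim_n\gamma_n(1-m^{(n)})$ exists (so $\gamma_n(1-\lambda^{(n)}\eta^{(n)}m^{(n)})\to b+m$). Condition 2 (for some $\alpha\in(1,2)$): (1) there are $C,k_0>0$ with $n\gamma_n\sum_{k\ge k_0}(k/n)^\alpha p^{(n)}_k+\sum_kk^\alpha q^{(n)}_k\le C$ for all $n$, and $\lim_{k_1\to\infty}\limsup_n\gamma_n\sum_{k\ge k_1}kp^{(n)}_k=0$; (2) there are $C_0>0$ and a probability $\Lambda^*$ on $\mathbb R_+$ with $\int t^{2\alpha}\Lambda^*(dt)<\infty$ and $\bar\Lambda^{(n)}\le C_0\bar\Lambda^*$ for all $n$. Fix $\beta\in[0,\infty)$ with $\beta>-(b+m)/(\sigma\lambda)$. Let $R^{(n)}$ be the unique locally integrable solution of $R^{(n)}(t)=\lambda^{(n)}m^{(n)}\bar\Lambda^{(n)}(t)+\lambda^{(n)}m^{(n)}\int_0^tR^{(n)}(t-s)\bar\Lambda^{(n)}(s)ds$, $t\ge0$, and $R^{(n)}_\beta(t)=e^{-\beta t/\gamma_n}R^{(n)}(t)$. For $k\in\mathbb Z_+$, $\mathbf y=(y_1,\dots,y_k)\in\mathbb R_+^k$: $R^{(n)}(t,k,\mathbf y)=\sum_{j=1}^k\big[\lambda^{(n)}\mathbf 1_{\{y_j>t\}}+\lambda^{(n)}\int_0^tR^{(n)}(t-s)\mathbf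 1_{\{y_j>s\}}ds\big]$ and $R^{(n)}_\beta(t,k,\mathbf y)=e^{-\beta t/\gamma_n}R^{(n)}(t,k,\mathbf y)$. *)

(* Defs.v *)
From Stdlib Require Import Reals Lra ClassicalEpsilon.
Open Scope R_scope.

(* Riemann integral value: Rint f a b v <-> f is Riemann integrable on [a,b]
   with integral v (RiemannInt does not depend on the proof). *)
Definition Rint (f : R -> R) (a b v : R) : Prop :=
  exists pr : Riemann_integrable f a b, RiemannInt pr = v.

(* Total version (value of the Riemann integral when it exists, junk otherwise). *)
Definition RI (f : R -> R) (a b : R) : R :=
  epsilon (inhabits 0) (fun v => Rint f a b v).

Definition ImpInt (f : R -> R) (l : R) : Prop :=
  (forall T, 0 <= T -> inhabited (Riemann_integrable f 0 T)) /\
  (forall eps, 0 < eps -> exists M, forall T, M <= T -> Rabs (RI f 0 T - l) < eps).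

Definition series (u : nat -> R) : R :=
  epsilon (inhabits 0) (fun l => infinite_sum u l).

Fixpoint fsum (k : nat) (f : nat -> R) : R :=
  match k with O => 0 | S k' => fsum k' f + f k' end.

(* finite sum sum_{j=a}^{b} f j (empty if b < a) *)
Definition fsum_range (a b : nat) (f : nat -> R) : R :=
  fsum (S b - a) (fun i => f (a + i)%nat).

(* Lb is the tail function t |-> Lambda((t,infinity)) of a probability
   measure Lambda on R_+ (this characterises Lambda). *)
Definition prob_tail (Lb : R -> R) : Prop :=
  (forall t, 0 <= t -> 0 <= Lb t <= 1) /\
  (forall s t, 0 <= s -> s <= t -> Lb t <= Lb s) /\
  (forall t, 0 <= t -> forall eps, 0 < eps ->
      exists d, 0 < d /\ forall s, t <= s < t + d -> Rabs (Lb s - Lb t) < eps) /\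
  (forall eps, 0 < eps -> exists M, forall t, M <= t -> Lb t < eps).

(* (p k)_{k>=1} is a probability law on Z_+ *)
Definition prob_Zplus (p : nat -> R) : Prop :=
  p 0%nat = 0 /\ (forall k, 0 <= p k) /\ infinite_sum p 1.

Definition genfun (p : nat -> R) (s : R) : R := series (fun k => p k * s ^ k).

Definition phi_n (p : nat -> R) (gam : R) (n : nat) (z : R) : R :=
  INR n * gam * (genfun p (1 - z / INR n) - (1 - z / INR n)).

Definition psi_n (q : nat -> R) (gam : R) (n : nat) (z : R) : R :=
  gam * (1 - genfun q (1 - z / INR n)).

Definition ind_gt (a b : R) : R := if Rlt_dec b a then 1 else 0.

Definition Rtky (lam : R) (Rs : R -> R) (t : R) (k : nat) (y : nat -> R) : R :=
  fsum k (fun j => lam * ind_gt (y j) t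
                   + lam * RI (fun s => Rs (t - s) * ind_gt (y j) s) 0 t).

Definition Rbeta_tky (beta gam lam : R) (Rs : R -> R) (t : R) (k : nat) (y : nat -> R) : R :=
  exp (- beta * t / gam) * Rtky lam Rs t k y.

(* Main.v *)
Require Import Defs.
From Stdlib Require Import Reals Lra Lia ClassicalEpsilon Classical.
From Coquelicot Require Import Coquelicot.
Open Scope R_scope.


Lemma RI_RInt f a b : ex_RInt f a b -> RI f a b = RInt f a b.
Proof.
  intros H. unfold RI.
  assert (Hx : exists v, Rint f a b v).
  { exists (RInt f a b). exists (ex_RInt_Reals_0 _ _ _ H). symmetry. apply RInt_Reals. }
  destruct (epsilon_spec (inhabits 0) (fun v => Rint f a b v) Hx) as [pr Hpr].
  rewrite <- Hpr. symmetry. apply RInt_Reals.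
Qed.

Lemma unif_int f a b : a <= b ->
  (forall e, 0 < e -> exists g, ex_RInt g a b /\ forall t, a <= t <= b -> Rabs (f t - g t) <= e) ->
  ex_RInt f a b.
Proof.
  intros Hab H. apply ex_RInt_Reals_1. intro eps.
  assert (Hd : 0 < eps / (2 * (b - a + 1))).
  { apply Rdiv_lt_0_compat. apply cond_pos. lra. }
  destruct (constructive_indefinite_description _ (H _ Hd)) as [g [Hg Hfg]].
  pose proof (ex_RInt_Reals_0 _ _ _ Hg) as pr.
  assert (He2 : 0 < eps / 2) by (generalize (cond_pos eps); lra).
  destruct (pr (mkposreal _ He2)) as [phi [psi [H1 H2]]].
  exists phi.
  exists (mkStepFun (StepFun_P28 1 psi (mkStepFun (StepFun_P4 a b (eps / (2 * (b - a + 1))))))).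
  split.
  - intros t Ht. simpl. unfold fct_cte.
    rewrite Rmin_left in Ht by lra. rewrite Rmax_right in Ht by lra.
    specialize (H1 t). rewrite Rmin_left, Rmax_right in H1 by lra.
    specialize (H1 Ht). specialize (Hfg t Ht).
    replace (f t - phi t) with ((f t - g t) + (g t - phi t)) by ring.
    eapply Rle_trans. apply Rabs_triang. lra.
  - rewrite StepFun_P30. rewrite StepFun_P18. simpl in H2.
    eapply Rle_lt_trans. apply Rabs_triang.
    rewrite Rmult_1_l. rewrite (Rabs_right (eps / _ * _)).
    2:{ apply Rle_ge. apply Rmult_le_pos. lra. lra. }
    assert (eps / (2 * (b - a + 1)) * (b - a) <= eps / 2).
    { unfold Rdiv. rewrite Rmult_comm, <- Rmult_assoc.
      apply Rle_trans with (eps * / 2 * ((b-a) * / (b - a + 1))).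
      right. field. lra.
      rewrite <- (Rmult_1_r (eps * / 2)) at 2.
      apply Rmult_le_compat_l. generalize (cond_pos eps); lra.
      apply Rmult_le_reg_r with (b - a + 1). lra.
      rewrite Rmult_assoc, Rinv_l by lra. lra. }
    lra.
Qed.

Lemma exR_sub1 (f : R -> R) a b c : a <= b <= c -> ex_RInt f a c -> ex_RInt f a b.
Proof. intros. exact (@ex_RInt_Chasles_1 R_CompleteNormedModule f a b c H H0). Qed.
Lemma exR_sub2 (f : R -> R) a b c : a <= b <= c -> ex_RInt f a c -> ex_RInt f b c.
Proof. intros. exact (@ex_RInt_Chasles_2 R_CompleteNormedModule f a b c H H0). Qed.
Lemma exR_sub (f : R -> R) a b c d : a <= c -> c <= d -> d <= b -> ex_RInt f a b -> ex_RInt f c d.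
Proof. intros. apply exR_sub1 with b. lra. apply exR_sub2 with a. lra. auto. Qed.

Lemma exR_plus (f g : R -> R) a b : ex_RInt f a b -> ex_RInt g a b -> ex_RInt (fun x => f x + g x) a b.
Proof. intros. exact (@ex_RInt_plus R_NormedModule f g a b H H0). Qed.
Lemma exR_minus (f g : R -> R) a b : ex_RInt f a b -> ex_RInt g a b -> ex_RInt (fun x => f x - g x) a b.
Proof. intros. exact (@ex_RInt_minus R_NormedModule f g a b H H0). Qed.
Lemma exR_scal (f : R -> R) a b l : ex_RInt f a b -> ex_RInt (fun x => l * f x) a b.
Proof. intros. exact (@ex_RInt_scal R_NormedModule f a b l H). Qed.
Lemma exR_const a b (c : R) : ex_RInt (fun _ => c) a b.
Proof. exact (@ex_RInt_const R_NormedModule a b c). Qed.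
Lemma RIntR_plus (f g : R -> R) a b : ex_RInt f a b -> ex_RInt g a b -> RInt (fun x => f x + g x) a b = RInt f a b + RInt g a b.
Proof. intros. exact (@RInt_plus R_CompleteNormedModule f g a b H H0). Qed.
Lemma RIntR_minus (f g : R -> R) a b : ex_RInt f a b -> ex_RInt g a b -> RInt (fun x => f x - g x) a b = RInt f a b - RInt g a b.
Proof. intros. exact (@RInt_minus R_CompleteNormedModule f g a b H H0). Qed.
Lemma RIntR_scal (f : R -> R) a b l : ex_RInt f a b -> RInt (fun x => l * f x) a b = l * RInt f a b.
Proof. intros. exact (@RInt_scal R_CompleteNormedModule f a b l H). Qed.
Lemma RIntR_const a b (c : R) : RInt (fun _ => c) a b = c * (b - a).
Proof. rewrite (@RInt_const R_CompleteNormedModule). unfold scal; simpl. unfold mult; simpl. ring. Qed.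
Lemma RIntR_Chasles (f : R -> R) a b c : ex_RInt f a b -> ex_RInt f b c -> RInt f a b + RInt f b c = RInt f a c.
Proof. intros. exact (@RInt_Chasles R_CompleteNormedModule f a b c H H0). Qed.
Lemma RIntR_ext (f g : R -> R) a b : a <= b -> (forall x, a < x < b -> f x = g x) -> RInt f a b = RInt g a b.
Proof. intros. apply (@RInt_ext R_CompleteNormedModule). rewrite Rmin_left, Rmax_right by lra. auto. Qed.
Lemma RIntR_point (f : R -> R) a : RInt f a a = 0.
Proof. exact (@RInt_point R_CompleteNormedModule a f). Qed.

Lemma ext_open (f g : R -> R) a b : a <= b -> (forall x, a < x < b -> f x = g x) -> ex_RInt f a b -> ex_RInt g a b.
Proof.
  intros Hab H. apply ex_RInt_ext. rewrite Rmin_left, Rmax_right by lra. auto.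
Qed.

Lemma level_int (h k : R -> R) a b c : a <= b -> ex_RInt h a b ->
  (forall s u, a <= s -> s <= u -> u <= b -> k u <= k s) ->
  ex_RInt (fun s => h s * (if Rle_dec c (k s) then 1 else 0)) a b.
Proof.
  intros Hab Hh Hk.
  destruct (Rle_dec c (k a)) as [Ha|Ha].
  - set (E := fun x => a <= x <= b /\ c <= k x).
    assert (HB : bound E). { exists b. intros x [Hx _]. lra. }
    assert (HE : exists x, E x). { exists a. split. lra. auto. }
    destruct (completeness E HB HE) as [m [Hm1 Hm2]].
    assert (Ham : a <= m). { apply Hm1. split. lra. auto. }
    assert (Hmb : m <= b). { apply Hm2. intros x [Hx _]. lra. }
    apply ex_RInt_Chasles with m.
    + apply ext_open with h. lra.
      intros x Hx.
      assert (exists x', E x' /\ x < x').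
      { apply NNPP. intro Hn. assert (m <= x). apply Hm2. intros z Hz.
        destruct (Rle_dec z x); auto. exfalso; apply Hn. exists z; split; auto; lra. lra. }
      destruct H as [x' [[Hx'1 Hx'2] Hx'3]].
      destruct (Rle_dec c (k x)) as [|n]. ring.
      exfalso. apply n. apply Rle_trans with (k x'); auto. apply Hk; lra.
      apply exR_sub1 with b. lra. auto.
    + apply ext_open with (fun _ => 0). lra.
      intros x Hx. destruct (Rle_dec c (k x)) as [Hc|]. 
      assert (x <= m). apply Hm1. split. lra. auto. lra. ring.
      apply exR_const.
  - apply ext_open with (fun _ => 0). lra.
    intros x Hx. destruct (Rle_dec c (k x)) as [Hc|]. exfalso. apply Ha.
    apply Rle_trans with (k x); auto. apply Hk; lra. ring.
    apply exR_const.
Qed.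

Fixpoint cnt (M : nat) (y : R) : R :=
  match M with O => 0 | S M' => cnt M' y + (if Rle_dec (INR (S M')) y then 1 else 0) end.

Lemma cnt_S M y : cnt (S M) y = cnt M y + (if Rle_dec (INR (S M)) y then 1 else 0).
Proof. reflexivity. Qed.

Lemma cnt_int (h k : R -> R) a b M : a <= b -> ex_RInt h a b ->
  (forall s u, a <= s -> s <= u -> u <= b -> k u <= k s) ->
  ex_RInt (fun s => h s * cnt M (k s)) a b.
Proof.
  intros Hab Hh Hk. induction M as [|M IH].
  - simpl. apply ext_open with (fun _ => 0). lra. intros; ring. apply exR_const.
  - apply ext_open with (fun s => (h s * cnt M (k s)) + (h s * (if Rle_dec (INR (S M)) (k s) then 1 else 0))).
    lra. intros x _. rewrite cnt_S. ring.
    apply exR_plus. auto. apply level_int; auto.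
Qed.

Lemma cnt_full M y : INR M <= y -> cnt M y = INR M.
Proof.
  induction M as [|M IH]; intros H. reflexivity.
  rewrite cnt_S, IH. destruct (Rle_dec (INR (S M)) y) as [|n]. rewrite S_INR. reflexivity.
  contradiction. rewrite S_INR in H. lra.
Qed.

Lemma cnt_bound M y : 0 <= y <= INR M -> y - 1 <= cnt M y <= y.
Proof.
  induction M as [|M IH]; intros H.
  - simpl in H. simpl. lra.
  - rewrite cnt_S. rewrite S_INR in H. destruct (Rle_dec (INR M) y) as [Hy|Hy].
    + rewrite cnt_full by auto. destruct (Rle_dec (INR (S M)) y) as [H2|H2]; rewrite S_INR in *; lra.
    + assert (0 <= y <= INR M) by lra. specialize (IH H0).
      destruct (Rle_dec (INR (S M)) y) as [H2|H2]; rewrite S_INR in *; lra.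
Qed.


Lemma nat_gt x : exists N : nat, x < INR N.
Proof. destruct (INR_archimed 1 x) as [N HN]. lra. exists N. lra. Qed.

Lemma exR_bound (h : R -> R) a b : a <= b -> ex_RInt h a b -> exists M, 0 <= M /\ forall t, a <= t <= b -> Rabs (h t) <= M.
Proof.
  intros Hab H. destruct (ex_RInt_ub h a b H) as [M HM].
  exists (Rabs M). split. apply Rabs_pos. intros t Ht.
  rewrite Rmin_left, Rmax_right in HM by lra. specialize (HM t Ht).
  apply Rle_trans with M. exact HM. apply RRle_abs.
Qed.

Lemma prod_mono (h k : R -> R) a b : a <= b -> ex_RInt h a b ->
  (forall s u, a <= s -> s <= u -> u <= b -> k u <= k s) ->
  (forall s, a <= s <= b -> 0 <= k s <= 1) ->
  ex_RInt (fun s => h s * k s) a b.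
Proof.
  intros Hab Hh Hk Hk01. apply unif_int. auto. intros e He.
  destruct (exR_bound h a b Hab Hh) as [M [HM0 HM]].
  destruct (nat_gt (M / e)) as [N0 HN0].
  set (N := S N0).
  assert (HN : INR N0 + 1 = INR N) by (unfold N; rewrite S_INR; ring).
  assert (HNpos : 0 < INR N) by (generalize (pos_INR N0); lra).
  exists (fun s => / INR N * (h s * cnt N (INR N * k s))). split.
  - apply exR_scal. apply cnt_int. auto. auto.
    intros s u H1 H2 H3. apply Rmult_le_compat_l. lra. apply Hk; auto.
  - intros t Ht.
    assert (Hc := cnt_bound N (INR N * k t)).
    destruct (Hk01 t Ht) as [Hk0 Hk1].
    assert (0 <= INR N * k t <= INR N). { split. apply Rmult_le_pos; lra.
      rewrite <- (Rmult_1_r (INR N)) at 2. apply Rmult_le_compat_l; lra. }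
    specialize (Hc H).
    replace (h t * k t - / INR N * (h t * cnt N (INR N * k t))) with
      (h t * / INR N * (INR N * k t - cnt N (INR N * k t))) by (field; lra).
    rewrite Rabs_mult, Rabs_mult. rewrite (Rabs_right (/ INR N)).
    2: { apply Rle_ge. left. apply Rinv_0_lt_compat. auto. }
    apply Rle_trans with (M * / INR N * 1).
    apply Rmult_le_compat. apply Rmult_le_pos. apply Rabs_pos. left; apply Rinv_0_lt_compat; auto.
    apply Rabs_pos. apply Rmult_le_compat_r. left; apply Rinv_0_lt_compat; auto. auto.
    apply Rabs_le. lra.
    rewrite Rmult_1_r. apply Rmult_le_reg_r with (INR N). auto.
    rewrite Rmult_assoc, Rinv_l by lra. rewrite Rmult_1_r.
    apply Rmult_le_reg_r with (/ e). apply Rinv_0_lt_compat; auto.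
    rewrite Rmult_assoc, (Rmult_comm (INR N)), <- Rmult_assoc, Rinv_r by lra.
    fold (M / e). lra.
Qed.

Lemma prod_monoK (h k : R -> R) a b K : a <= b -> 0 < K -> ex_RInt h a b ->
  (forall s u, a <= s -> s <= u -> u <= b -> k u <= k s) ->
  (forall s, a <= s <= b -> 0 <= k s <= K) ->
  ex_RInt (fun s => h s * k s) a b.
Proof.
  intros Hab HK Hh Hk Hk01.
  apply ext_open with (fun s => K * (h s * (/K * k s))). auto.
  intros; field; lra.
  apply exR_scal. apply prod_mono; auto.
  intros. apply Rmult_le_compat_l. left; apply Rinv_0_lt_compat; auto. apply Hk; auto.
  intros s Hs. specialize (Hk01 s Hs). split. apply Rmult_le_pos. left; apply Rinv_0_lt_compat; auto. lra.
  apply Rmult_le_reg_l with K. auto. rewrite <- Rmult_assoc, Rinv_r by lra. lra.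
Qed.

Lemma exR_refl (h : R -> R) t : 0 <= t -> ex_RInt h 0 t -> ex_RInt (fun s => h (t - s)) 0 t.
Proof.
  intros Ht H.
  assert (H1 : ex_RInt h (-1 * 0 + t) (-1 * t + t)).
  { replace (-1 * 0 + t) with t by ring. replace (-1 * t + t) with 0 by ring.
    apply (@ex_RInt_swap R_NormedModule). auto. }
  pose proof (@ex_RInt_comp_lin R_NormedModule h (-1) t 0 t H1) as H2.
  apply ext_open with (fun s => -1 * (scal (-1) (h (-1 * s + t)))). auto.
  intros x _. unfold scal; simpl. unfold mult; simpl. replace (-1 * x + t) with (t - x) by ring. ring.
  apply exR_scal. exact H2.
Qed.


Lemma pow2_ge j : INR j <= 2 ^ j.
Proof.
  induction j as [|j IH]. simpl. lra.
  rewrite S_INR. simpl. assert (1 <= 2 ^ j) by (apply pow_R1_Rle; lra). lra.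
Qed.

Lemma compare K f d : 0 < K ->
  (forall s, 0 <= s -> 0 <= f s <= K) ->
  (forall T, 0 <= T -> exists M, forall t, 0 <= t <= T -> d t <= M) ->
  (forall t, 0 <= t -> ex_RInt (fun s => d (t - s) * f s) 0 t) ->
  (forall t, 0 <= t -> d t <= RInt (fun s => d (t - s) * f s) 0 t) ->
  forall t, 0 <= t -> d t <= 0.
Proof.
  intros HK Hf Hb Hi Hd.
  set (del := / (2 * K)).
  assert (Hdel : 0 < del) by (unfold del; apply Rinv_0_lt_compat; lra).
  assert (HKdel : K * del = / 2) by (unfold del; field; lra).
  assert (Hstep : forall n : nat, forall t, 0 <= t <= INR n * del -> d t <= 0).
  { induction n as [|n IH].
    - intros t Ht. simpl in Ht. assert (t = 0) by lra. subst t.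
      eapply Rle_trans. apply Hd. lra. rewrite RIntR_point. lra.
    - set (tau := INR n * del).
      assert (Htau : 0 <= tau) by (unfold tau; apply Rmult_le_pos; [apply pos_INR|lra]).
      destruct (Hb (tau + del)) as [M HM]. lra.
      set (M0 := Rabs M).
      assert (HM0 : 0 <= M0) by apply Rabs_pos.
      assert (Hj : forall j : nat, forall t, tau <= t <= tau + del -> d t <= M0 / 2 ^ j).
      { induction j as [|j IHj].
        - intros t Ht. simpl. unfold Rdiv. rewrite Rinv_1, Rmult_1_r.
          apply Rle_trans with M. apply HM. lra. apply RRle_abs.
        - intros t Ht.
          assert (H2j : 0 < 2 ^ j) by (apply pow_lt; lra).
          set (c := M0 / 2 ^ j).
          assert (Hc : 0 <= c) by (unfold c; apply Rdiv_le_0_compat; lra).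
          eapply Rle_trans. apply Hd. lra.
          rewrite <- (RIntR_Chasles _ 0 (t - tau) t).
          2: { apply exR_sub1 with t. lra. apply Hi. lra. }
          2: { apply exR_sub2 with 0. lra. apply Hi. lra. }
          assert (H1 : RInt (fun s => d (t - s) * f s) 0 (t - tau) <= RInt (fun _ => c * K) 0 (t - tau)).
          { apply RInt_le. lra. apply exR_sub1 with t. lra. apply Hi. lra. apply exR_const.
            intros x Hx. destruct (Hf x) as [Hf0 HfK]. lra.
            apply Rle_trans with (c * f x).
            apply Rmult_le_compat_r. auto. apply IHj. lra.
            apply Rmult_le_compat_l; auto. }
          assert (H2 : RInt (fun s => d (t - s) * f s) (t - tau) t <= RInt (fun _ => 0) (t - tau) t).
          { apply RInt_le. lra. apply exR_sub2 with 0. lra. apply Hi. lra. apply exR_const.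
            intros x Hx. destruct (Hf x) as [Hf0 HfK]. lra.
            assert (d (t - x) <= 0). apply IH. split. lra. fold tau. lra.
            rewrite <- (Rmult_0_l (f x)). apply Rmult_le_compat_r; auto. }
          rewrite RIntR_const in H1, H2.
          simpl. unfold Rdiv in *. rewrite Rinv_mult. 
          assert (c * K * (t - tau - 0) <= c * K * del).
          { apply Rmult_le_compat_l. apply Rmult_le_pos; lra. lra. }
          assert (c * K * del = M0 * / 2 ^ j * / 2). { unfold c. rewrite Rmult_assoc, HKdel. unfold Rdiv. ring. }
          nra. }
      intros t Ht. rewrite S_INR in Ht.
      destruct (Rle_dec t tau) as [Hle|Hlt]. apply IH. fold tau. lra.
      apply Rnot_lt_le. intro Hpos.
      destruct (nat_gt (M0 / d t)) as [j Hjj].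
      assert (H : d t <= M0 / 2 ^ j) by (apply Hj; unfold tau in *; lra).
      assert (H2j : 0 < 2 ^ j) by (apply pow_lt; lra).
      assert (H0 : INR j <= 2 ^ j) by apply pow2_ge.
      assert (H2 : M0 / d t < 2 ^ j) by lra.
      apply Rmult_lt_compat_r with (r := d t) in H2; auto.
      unfold Rdiv in H2. rewrite Rmult_assoc, Rinv_l in H2 by lra.
      apply Rmult_le_compat_r with (r := 2 ^ j) in H; [|lra].
      unfold Rdiv in H. rewrite Rmult_assoc, Rinv_l in H by lra. lra. }
  intros t Ht. destruct (nat_gt (t / del)) as [n Hn]. apply (Hstep n). split. auto.
  apply Rmult_lt_compat_r with (r := del) in Hn; auto. unfold Rdiv in Hn.
  rewrite Rmult_assoc, Rinv_l in Hn by lra. lra.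
Qed.


Lemma exR_cont (f : R -> R) a b : (forall x, continuity_pt f x) -> ex_RInt f a b.
Proof. intros H. apply (@ex_RInt_continuous R_CompleteNormedModule). intros z _. apply continuity_pt_filterlim. auto. Qed.
Lemma exR_cont_exp c t a b : ex_RInt (fun s => exp (- c * (t - s))) a b.
Proof. apply exR_cont. intro x. apply continuity_pt_comp with (f1 := fun s => - c * (t - s)) (f2 := exp).
 apply derivable_continuous_pt. reg. apply derivable_continuous_pt. apply derivable_pt_exp. Qed.
Lemma exR_cont_exp1 c a b : ex_RInt (fun s => exp (- c * s)) a b.
Proof. apply exR_cont. intro x. apply continuity_pt_comp with (f1 := fun s => - c * s) (f2 := exp).
 apply derivable_continuous_pt. reg. apply derivable_continuous_pt. apply derivable_pt_exp. Qed.

Lemma renewal_bound K f g : 0 < K ->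
  (forall s, 0 <= s -> 0 <= f s <= K) ->
  (forall s u, 0 <= s -> s <= u -> f u <= f s) ->
  (forall T, 0 <= T -> RInt f 0 T <= 1) ->
  (forall T, 0 <= T -> ex_RInt g 0 T) ->
  (forall t, 0 <= t -> g t = f t + RInt (fun s => g (t - s) * f s) 0 t) ->
  forall t, 0 <= t -> g t <= 362 * K.
Proof.
  intros HK Hf Hmon HF Hg Heq.
  assert (Hconv : forall h t, 0 <= t -> ex_RInt h 0 t -> ex_RInt (fun s => h (t - s) * f s) 0 t).
  { intros h t Ht Hh. apply prod_monoK with K; [auto|auto|apply exR_refl; auto|intros; apply Hmon; lra|intros; apply Hf; lra]. }
  assert (Hfi : forall a b, 0 <= a -> a <= b -> ex_RInt f a b).
  { intros a b Ha Hab. apply ext_open with (fun s => 1 * f s). auto. intros; ring.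
    apply prod_monoK with K; [auto|auto|apply exR_const|intros; apply Hmon; lra|intros; apply Hf; lra]. }
  set (c := 20 * K). set (A := 362 * K). set (B := 180 * K).
  set (phi := fun u => A - B * exp (- c * u)).
  assert (Hphi_i : forall T, ex_RInt phi 0 T).
  { intro T. unfold phi. apply exR_minus. apply exR_const. apply exR_scal.
    apply exR_cont_exp1. }
  assert (HIi : forall t a b, 0 <= a -> a <= b -> ex_RInt (fun s => exp (- c * (t - s)) * f s) a b).
  { intros t a b Ha Hab. apply prod_monoK with K; [auto|auto|apply exR_cont_exp|intros; apply Hmon; lra|intros; apply Hf; lra]. }
  (* supersolution *)
  assert (Hsup : forall t, 0 <= t -> f t + RInt (fun s => phi (t - s) * f s) 0 t <= phi t).
  { intros t Ht.
    set (F := RInt f 0 t). set (I := RInt (fun s => exp (- c * (t - s)) * f s) 0 t).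
    assert (Hconv_eq : RInt (fun s => phi (t - s) * f s) 0 t = A * F - B * I).
    { rewrite (RIntR_ext _ (fun s => A * f s - B * (exp (- c * (t - s)) * f s))) by (auto; intros; unfold phi; ring).
      assert (H1 : ex_RInt f 0 t) by (apply Hfi; lra).
      assert (H2 : ex_RInt (fun s => exp (- c * (t - s)) * f s) 0 t) by (apply HIi; lra).
      rewrite (RIntR_minus (fun s => A * f s)). rewrite (RIntR_scal f), (RIntR_scal (fun s => exp (- c * (t - s)) * f s)). reflexivity.
      auto. auto. apply exR_scal; auto. apply exR_scal; auto. }
    rewrite Hconv_eq. unfold phi.
    assert (HF1 : F <= 1) by (apply HF; auto).
    assert (HFK : F <= K * t).
    { unfold F. apply Rle_trans with (RInt (fun _ => K) 0 t).
      apply RInt_le; auto. apply Hfi; lra. apply exR_const. intros; apply Hf; lra.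
      rewrite RIntR_const. lra. }
    assert (HI0 : 0 <= I).
    { apply RInt_ge_0; auto. apply HIi; lra. intros x Hx. apply Rmult_le_pos. left; apply exp_pos. apply Hf; lra. }
    assert (Hect : exp (- c * t) <= 1).
    { rewrite <- exp_0. assert (0 <= c * t) by (apply Rmult_le_pos; unfold c; lra).
      destruct (Req_dec (- c * t) 0) as [E|E]. rewrite E; lra. left; apply exp_increasing; lra. }
    destruct (Hf t Ht) as [Hft0 HftK].
    destruct (Rle_dec F (/ 2)) as [Hle|Hgt].
    - assert (K * F <= K * / 2) by (apply Rmult_le_compat_l; lra).
      assert (0 <= K * I) by (apply Rmult_le_pos; lra).
      assert (K * exp (- c * t) <= K * 1) by (apply Rmult_le_compat_l; lra).
      unfold A, B. lra.
    - assert (Ht2 : / (2 * K) < t).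
      { apply Rnot_le_lt. intro Hc. apply Hgt. apply Rle_trans with (K * t). auto.
        apply Rle_trans with (K * / (2 * K)). apply Rmult_le_compat_l; lra. right; field; lra. }
      set (t0 := / (4 * K)).
      assert (Ht0 : 0 < t0) by (unfold t0; apply Rinv_0_lt_compat; lra).
      assert (Ht0t : t0 < t).
      { apply Rle_lt_trans with (/ (2 * K)); auto. unfold t0. apply Rinv_le_contravar; lra. }
      assert (HFt0 : RInt f 0 t0 <= / 4).
      { apply Rle_trans with (RInt (fun _ => K) 0 t0).
        apply RInt_le; lra || auto. apply Hfi; lra. apply exR_const. intros; apply Hf; lra.
        rewrite RIntR_const. unfold t0. right; field; lra. }
      assert (HFsplit : RInt f 0 t0 + RInt f t0 t = F).
      { apply RIntR_Chasles; apply Hfi; lra. }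
      assert (HIsplit : RInt (fun s => exp (- c * (t - s)) * f s) 0 t0 +
                        RInt (fun s => exp (- c * (t - s)) * f s) t0 t = I).
      { apply RIntR_Chasles; apply HIi; lra. }
      assert (HIa : 0 <= RInt (fun s => exp (- c * (t - s)) * f s) 0 t0).
      { apply RInt_ge_0; lra || auto. apply HIi; lra. intros x Hx. apply Rmult_le_pos. left; apply exp_pos. apply Hf; lra. }
      assert (HIb : exp (- c * (t - t0)) * RInt f t0 t <= RInt (fun s => exp (- c * (t - s)) * f s) t0 t).
      { rewrite <- RIntR_scal by (apply Hfi; lra).
        apply RInt_le. lra. apply exR_scal; apply Hfi; lra. apply HIi; lra.
        intros x Hx. apply Rmult_le_compat_r. apply Hf; lra.
        destruct (Req_dec x t0). subst; lra. left; apply exp_increasing.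
        assert (c * t0 < c * x) by (apply Rmult_lt_compat_l; unfold c; lra). lra. }
      assert (He5 : 6 <= exp (c * t0)).
      { replace (c * t0) with 5 by (unfold c, t0; field; lra). 
        assert (H5 := exp_ineq1 5). lra. }
      assert (Hsplitexp : exp (- c * (t - t0)) = exp (- c * t) * exp (c * t0)).
      { rewrite <- exp_plus. f_equal. ring. }
      assert (HI1 : 6 / 4 * exp (- c * t) <= I).
      { assert (HE : 0 < exp (- c * t)) by apply exp_pos.
        assert (Hrf : / 4 <= RInt f t0 t) by lra.
        rewrite Hsplitexp in HIb.
        assert (exp (- c * t) * exp (c * t0) * / 4 <= exp (- c * t) * exp (c * t0) * RInt f t0 t).
        { apply Rmult_le_compat_l. apply Rmult_le_pos; left; auto; apply exp_pos. auto. }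
        assert (exp (- c * t) * 6 <= exp (- c * t) * exp (c * t0)) by (apply Rmult_le_compat_l; lra).
        lra. }
      set (t1 := t - / c).
      assert (Hc0 : 0 < c) by (unfold c; lra).
      assert (Ht1 : 0 <= t1).
      { unfold t1. assert (/ c <= / (2 * K)). apply Rinv_le_contravar. lra. unfold c; lra. lra. }
      assert (Ht1t : t1 < t) by (unfold t1; assert (0 < / c) by (apply Rinv_0_lt_compat; lra); lra).
      assert (HI2 : f t / 3 * (t - t1) <= I).
      { unfold I. rewrite <- (RIntR_Chasles _ 0 t1 t) by (apply HIi; lra).
        assert (0 <= RInt (fun s => exp (- c * (t - s)) * f s) 0 t1).
        { apply RInt_ge_0; lra || auto. apply HIi; lra. intros x Hx. apply Rmult_le_pos. left; apply exp_pos. apply Hf; lra. }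
        assert (f t / 3 * (t - t1) <= RInt (fun s => exp (- c * (t - s)) * f s) t1 t).
        { rewrite <- RIntR_const. apply RInt_le. lra. apply exR_const. apply HIi; lra.
          intros x Hx.
          assert (Hex : / 3 <= exp (- c * (t - x))).
          { apply Rle_trans with (exp (-1)).
            replace (exp (-1)) with (/ exp 1) by (rewrite <- exp_Ropp; f_equal; lra). apply Rinv_le_contravar. apply exp_pos. apply exp_le_3.
            destruct (Req_dec (-1) (- c * (t - x))) as [E|E]. rewrite E; lra.
            left; apply exp_increasing. unfold t1 in Hx.
            assert (c * (t - x) < c * / c) by (apply Rmult_lt_compat_l; lra).
            rewrite Rinv_r in H0 by lra. lra. }
          assert (f t <= f x) by (apply Hmon; lra).
          unfold Rdiv. rewrite Rmult_comm. apply Rmult_le_compat; lra. }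
        lra. }
      assert (Htt1 : t - t1 = / c) by (unfold t1; ring).
      rewrite Htt1 in HI2.
      assert (HBI : f t <= B * (I - exp (- c * t))).
      { assert (I - exp (- c * t) >= I / 3) by lra.
        assert (f t / 3 * / c / 3 * B = f t) by (unfold B, c; field; lra).
        assert (0 <= B) by (unfold B; lra).
        assert (HH : f t / 3 * / c / 3 <= I - exp (- c * t)) by lra.
        apply Rmult_le_compat_l with (r := B) in HH; auto. lra. }
      assert (A * F <= A * 1) by (apply Rmult_le_compat_l; unfold A; lra).
      lra. }
  set (d := fun u => g u - phi u).
  assert (Hdle : forall t, 0 <= t -> d t <= 0).
  { apply (compare K f d HK Hf).
    - intros T HT. destruct (exR_bound g 0 T HT (Hg T HT)) as [M [HM0 HM]].
      exists (M + B). intros t Ht. unfold d, phi.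
      assert (g t <= M) by (apply Rle_trans with (Rabs (g t)); [apply RRle_abs | apply HM; auto]).
      assert (0 < exp (- c * t)) by apply exp_pos.
      assert (exp (- c * t) <= 1).
      { destruct (Req_dec (- c * t) 0) as [E|E]. rewrite E, exp_0; lra.
        left. rewrite <- exp_0. apply exp_increasing.
        assert (0 <= c * t) by (apply Rmult_le_pos; unfold c; lra). lra. }
      assert (B * exp (- c * t) <= B * 1) by (apply Rmult_le_compat_l; unfold B; lra).
      assert (0 <= A) by (unfold A; lra).
      lra.
    - intros t Ht. apply Hconv; auto. unfold d. apply exR_minus; auto.
    - intros t Ht. unfold d at 1. rewrite Heq by auto.
      assert (Hs := Hsup t Ht).
      rewrite (RIntR_ext (fun s => d (t - s) * f s) (fun s => g (t - s) * f s - phi (t - s) * f s)) by (auto; intros; unfold d; cbv beta; ring).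
      rewrite RIntR_minus. lra. apply Hconv; auto. apply Hconv; auto. }
  intros t Ht. specialize (Hdle t Ht). unfold d, phi in Hdle.
  assert (0 < exp (- c * t)) by apply exp_pos.
  assert (0 <= B * exp (- c * t)) by (apply Rmult_le_pos; unfold B; lra).
  unfold A in *. lra.
Qed.


Lemma exp_le1 x : 0 <= x -> exp (- x) <= 1.
Proof. intros. rewrite <- exp_0. destruct (Req_dec x 0). subst. rewrite Ropp_0. lra.
  left. apply exp_increasing. lra. Qed.

Lemma exp_mono x y : x <= y -> exp x <= exp y.
Proof. intros. destruct (Req_dec x y). subst; lra. left; apply exp_increasing; lra. Qed.

Lemma tilt_bound (K r : R) (Lb Rs : R -> R) : 0 < K -> 0 <= r -> prob_tail Lb ->
  (forall T, 0 <= T -> inhabited (Riemann_integrable Rs 0 T)) ->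
  (forall t, 0 <= t -> Rs t = K * Lb t + K * RI (fun s => Rs (t - s) * Lb s) 0 t) ->
  (forall T, 0 <= T -> RInt (fun s => exp (- (r * s)) * (K * Lb s)) 0 T <= 1) ->
  forall u, 0 <= u -> exp (- (r * u)) * Rs u <= 362 * K.
Proof.
  intros HK Hr [HL1 [HL2 _]] HRi HRe HF.
  assert (HRs : forall T, 0 <= T -> ex_RInt Rs 0 T).
  { intros T HT. destruct (HRi T HT) as [pr]. apply ex_RInt_Reals_1. exact pr. }
  set (f := fun s => exp (- (r * s)) * (K * Lb s)).
  set (g := fun u => exp (- (r * u)) * Rs u).
  apply (renewal_bound K f g HK).
  - intros s Hs. unfold f. destruct (HL1 s Hs). assert (exp (- (r * s)) <= 1) by (apply exp_le1; nra).
    assert (0 < exp (- (r * s))) by apply exp_pos. split. apply Rmult_le_pos. lra. nra.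
    assert (K * Lb s <= K) by nra. nra.
  - intros s u Hs Hsu. unfold f. destruct (HL1 s Hs). destruct (HL1 u) as [Hu0 Hu1]. lra.
    assert (exp (- (r * u)) <= exp (- (r * s))) by (apply exp_mono; nra).
    assert (Lb u <= Lb s) by (apply HL2; auto).
    assert (0 < exp (- (r * u))) by apply exp_pos.
    apply Rmult_le_compat; nra.
  - exact HF.
  - intros T HT. unfold g.
    apply ext_open with (fun s => Rs s * exp (- (r * s))). auto. intros; ring.
    apply prod_mono. auto. apply HRs; auto.
    intros s u H1 H2 H3. apply exp_mono. nra.
    intros s Hs. split. left; apply exp_pos. apply exp_le1. nra.
  - intros t Ht. unfold g at 1. rewrite HRe by auto.
    assert (Hi : ex_RInt (fun s => Rs (t - s) * Lb s) 0 t).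
    { apply prod_mono. auto. apply exR_refl; auto. intros; apply HL2; lra. intros; apply HL1; lra. }
    rewrite RI_RInt by auto.
    rewrite (RIntR_ext (fun s => g (t - s) * f s) (fun s => exp (- (r * t)) * K * (Rs (t - s) * Lb s))).
    rewrite RIntR_scal by auto. unfold f. assert (E4 : forall a b c d : R, a * (b + c * d) = a * b + a * c * d) by (intros; ring). apply E4.
    auto. intros x Hx. unfold g, f.
    replace (exp (- (r * t))) with (exp (- (r * (t - x))) * exp (- (r * x))) by (rewrite <- exp_plus; f_equal; ring).
    ring.
Qed.


Lemma exp_taylor x : 0 <= x -> exp (- x) <= 1 - x + x * x.
Proof.
  intros Hx. rewrite exp_Ropp.
  assert (H1 : 1 + x <= exp x).
  { destruct (Req_dec x 0). subst. rewrite exp_0. lra. left. apply exp_ineq1. auto. }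
  assert (Hp : 0 < 1 - x + x * x) by nra.
  assert (He : 0 < exp x) by apply exp_pos.
  apply Rmult_le_reg_l with (exp x). auto. rewrite Rinv_r by lra.
  assert ((1 + x) * (1 - x + x * x) <= exp x * (1 - x + x * x)) by (apply Rmult_le_compat_r; lra).
  assert (0 <= x * x * x) by (apply Rmult_le_pos; nra).
  nra.
Qed.

Lemma exR_contLb (h Lb : R -> R) a b : 0 <= a -> a <= b -> (forall x, continuity_pt h x) -> prob_tail Lb ->
  ex_RInt (fun s => h s * Lb s) a b.
Proof.
  intros Ha Hab Hc [HL1 [HL2 _]]. apply prod_mono. auto. apply exR_cont. auto.
  intros; apply HL2; lra. intros; apply HL1; lra.
Qed.

Lemma exR_Lb Lb a b : 0 <= a -> a <= b -> prob_tail Lb -> ex_RInt Lb a b.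
Proof.
  intros. apply ext_open with (fun s => (fun _ => 1) s * Lb s). auto. intros; ring.
  apply exR_contLb; auto. intros; apply continuity_pt_const. unfold constant; auto.
Qed.

Lemma exR_sLb Lb a b : 0 <= a -> a <= b -> prob_tail Lb -> ex_RInt (fun s => s * Lb s) a b.
Proof. intros. apply exR_contLb with (h := fun s => s); auto. intros; apply continuity_pt_id. Qed.

Lemma exR_eLb r Lb a b : 0 <= a -> a <= b -> prob_tail Lb -> ex_RInt (fun s => exp (- (r * s)) * Lb s) a b.
Proof. intros. apply exR_contLb with (h := fun s => exp (- (r * s))); auto.
  intro x. apply continuity_pt_comp with (f1 := fun s => - (r * s)) (f2 := exp).
  apply derivable_continuous_pt. reg. apply derivable_continuous_pt. apply derivable_pt_exp. Qed.

Lemma RInt_mono_T h T T' : 0 <= T -> T <= T' -> ex_RInt h 0 T' -> (forall s, 0 <= s -> 0 <= h s) ->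
  RInt h 0 T <= RInt h 0 T'.
Proof.
  intros HT HTT Hi Hp. rewrite <- (RIntR_Chasles h 0 T T').
  assert (0 <= RInt h T T'). apply RInt_ge_0. auto. apply exR_sub2 with 0. lra. auto.
  intros; apply Hp; lra. lra.
  apply exR_sub1 with T'. lra. auto. apply exR_sub2 with 0. lra. auto.
Qed.

Lemma ImpInt_le h l : ImpInt h l -> (forall s, 0 <= s -> 0 <= h s) -> forall T, 0 <= T -> RInt h 0 T <= l.
Proof.
  intros [Hi Hl] Hp T HT.
  assert (Hex : forall T, 0 <= T -> ex_RInt h 0 T).
  { intros T0 HT0. destruct (Hi T0 HT0) as [pr]. apply ex_RInt_Reals_1. exact pr. }
  apply Rnot_lt_le. intro Hc.
  destruct (Hl (RInt h 0 T - l)) as [M HM]. lra.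
  specialize (HM (Rmax M T) (Rmax_l _ _)).
  rewrite RI_RInt in HM by (apply Hex; apply Rle_trans with T; auto; apply Rmax_r).
  assert (RInt h 0 T <= RInt h 0 (Rmax M T)).
  { apply RInt_mono_T; auto. apply Rmax_r. apply Hex. apply Rle_trans with T; auto; apply Rmax_r. }
  apply Rabs_def2 in HM. lra.
Qed.

Lemma ImpInt_ge h l : ImpInt h l -> forall e, 0 < e -> exists M, 0 <= M /\ forall T, M <= T -> l - e < RInt h 0 T.
Proof.
  intros [Hi Hl] e He. destruct (Hl e He) as [M HM]. exists (Rmax M 0). split. apply Rmax_r.
  intros T HT. specialize (HM T (Rle_trans _ _ _ (Rmax_l _ _) HT)).
  rewrite RI_RInt in HM. apply Rabs_def2 in HM. lra.
  destruct (Hi T) as [pr]. apply Rle_trans with (Rmax M 0); auto; apply Rmax_r.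
  apply ex_RInt_Reals_1. exact pr.
Qed.

Lemma int_bound_n (K r eta sig S tau : R) (Lb : R -> R) : 0 < K -> 0 <= r -> 0 <= S -> prob_tail Lb ->
  ImpInt Lb eta -> ImpInt (fun t => t * Lb t) sig ->
  (forall T, S <= T -> RInt (fun s => s * Lb s) S T <= tau) ->
  forall T, 0 <= T -> RInt (fun s => exp (- (r * s)) * (K * Lb s)) 0 T <= K * (eta - r * sig + r * r * S * sig + r * tau).
Proof.
  intros HK Hr HS HL Heta Hsig Htau T HT.
  destruct HL as [HL1 [HL2 HL3]].
  assert (HL : prob_tail Lb) by (split; auto).
  set (X := RInt (fun s => exp (- (r * s)) * (K * Lb s)) 0 T).
  set (Y := K * (eta - r * sig + r * r * S * sig + r * tau)).
  assert (Hkey : forall e, 0 < e -> X <= Y + K * r * e).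
  { intros e He.
    destruct (ImpInt_ge _ _ Hsig e He) as [M [HM0 HM]].
    set (T' := Rmax T (Rmax S M)).
    assert (HT'T : T <= T') by apply Rmax_l.
    assert (HT'S : S <= T') by (unfold T'; eapply Rle_trans; [apply Rmax_l | apply Rmax_r]).
    assert (HT'M : M <= T') by (unfold T'; eapply Rle_trans; [apply Rmax_r | apply Rmax_r]).
    assert (HX : X <= RInt (fun s => exp (- (r * s)) * (K * Lb s)) 0 T').
    { apply RInt_mono_T; auto.
      apply ext_open with (fun s => K * (exp (- (r * s)) * Lb s)). lra. intros; ring.
      apply exR_scal. apply exR_eLb; auto; lra.
      intros s Hs. destruct (HL1 s Hs). apply Rmult_le_pos. left; apply exp_pos. nra. }
    assert (HX2 : RInt (fun s => exp (- (r * s)) * (K * Lb s)) 0 T' = K * RInt (fun s => exp (- (r * s)) * Lb s) 0 T').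
    { rewrite <- RIntR_scal. apply RIntR_ext. lra. intros; ring. apply exR_eLb; auto; lra. }
    set (E := fun a b => RInt (fun s => exp (- (r * s)) * Lb s) a b).
    set (L := fun a b => RInt Lb a b).
    set (Q := fun a b => RInt (fun s => s * Lb s) a b).
    assert (HE : E 0 S + E S T' = E 0 T') by (apply RIntR_Chasles; apply exR_eLb; auto; lra).
    assert (HLs : L 0 S + L S T' = L 0 T') by (apply RIntR_Chasles; apply exR_Lb; auto; lra).
    assert (HQs : Q 0 S + Q S T' = Q 0 T') by (apply RIntR_Chasles; apply exR_sLb; auto; lra).
    assert (HiL : ex_RInt Lb 0 S) by (apply exR_Lb; auto; lra).
    assert (HiQ : ex_RInt (fun s => s * Lb s) 0 S) by (apply exR_sLb; auto; lra).
    assert (Hcomb : RInt (fun s => (Lb s - r * (s * Lb s)) + r * r * S * (s * Lb s)) 0 S = L 0 S - r * Q 0 S + r * r * S * Q 0 S).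
    { assert (Hi1 : ex_RInt (fun s => r * (s * Lb s)) 0 S) by (apply exR_scal; exact HiQ).
      assert (Hi2 : ex_RInt (fun s => r * r * S * (s * Lb s)) 0 S) by (apply exR_scal; exact HiQ).
      assert (Hi3 : ex_RInt (fun s => Lb s - r * (s * Lb s)) 0 S) by (apply exR_minus; [exact HiL|exact Hi1]).
      rewrite (RIntR_plus (fun s => Lb s - r * (s * Lb s)) (fun s => r * r * S * (s * Lb s)) 0 S Hi3 Hi2).
      rewrite (RIntR_minus Lb (fun s => r * (s * Lb s)) 0 S HiL Hi1).
      rewrite (RIntR_scal (fun s => s * Lb s) 0 S r HiQ).
      rewrite (RIntR_scal (fun s => s * Lb s) 0 S (r * r * S) HiQ). reflexivity. }
    assert (HE1 : E 0 S <= L 0 S - r * Q 0 S + r * r * S * Q 0 S).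
    { rewrite <- Hcomb. unfold E.
      apply RInt_le. auto. apply exR_eLb; auto; lra.
      apply exR_plus. apply exR_minus. auto. apply exR_scal; auto. apply exR_scal; auto.
      intros x Hx. destruct (HL1 x) as [H0 H1]. lra.
      assert (Ht := exp_taylor (r * x)).
      assert (r * x * (r * x) <= r * r * S * x).
      { replace (r * x * (r * x)) with ((r * r * x) * x) by ring.
        replace (r * r * S * x) with ((r * r * x) * S) by ring.
        apply Rmult_le_compat_l. apply Rmult_le_pos. nra. lra. lra. }
      assert (Hrx : 0 <= r * x) by nra. specialize (Ht Hrx).
      assert (exp (- (r * x)) * Lb x <= (1 - r * x + r * r * S * x) * Lb x).
      { apply Rmult_le_compat_r. auto. lra. }
      lra. }
    assert (HE2 : E S T' <= L S T').
    { apply RInt_le. auto. apply exR_eLb; auto; lra. apply exR_Lb; auto; lra.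
      intros x Hx. destruct (HL1 x) as [H0 H1]. lra.
      assert (exp (- (r * x)) <= 1) by (apply exp_le1; nra). nra. }
    assert (HLe : L 0 T' <= eta).
    { apply ImpInt_le; auto. intros; apply HL1; auto. lra. }
    assert (HQ1 : sig - e < Q 0 T') by (apply HM; auto).
    assert (HQ2 : Q 0 S <= sig).
    { apply (ImpInt_le (fun t => t * Lb t)); auto. intros s Hs. destruct (HL1 s Hs); nra. }
    assert (HQ3 : Q S T' <= tau) by (apply Htau; auto).
    assert (HQ0 : 0 <= Q 0 S).
    { unfold Q. apply RInt_ge_0. exact HS. exact HiQ. intros x Hx. assert (Hb := HL1 x ltac:(lra)). nra. }
    assert (HX3 : E 0 T' <= eta - r * sig + r * r * S * sig + r * tau + r * e).
    { assert (r * r * S * Q 0 S <= r * r * S * sig) by (apply Rmult_le_compat_l; [repeat apply Rmult_le_pos; lra|lra]).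
      assert (r * (sig - e) <= r * Q 0 T') by (apply Rmult_le_compat_l; lra).
      assert (r * Q S T' <= r * tau) by (apply Rmult_le_compat_l; lra).
      assert (r * Q 0 S = r * Q 0 T' - r * Q S T') by (rewrite <- HQs; ring).
      lra. }
    fold X in HX. unfold E in HX3. rewrite HX2 in HX.
    assert (K * RInt (fun s => exp (- (r * s)) * Lb s) 0 T' <= K * (eta - r * sig + r * r * S * sig + r * tau + r * e))
      by (apply Rmult_le_compat_l; lra).
    unfold Y. lra. }
  apply Rnot_lt_le. intro Hc.
  set (e := (X - Y) / (K * r + 1)).
  assert (He : 0 < e) by (unfold e; apply Rdiv_lt_0_compat; nra).
  specialize (Hkey e He).
  assert (K * r * e < X - Y).
  { unfold e. apply Rmult_lt_reg_r with (K * r + 1). nra.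
    unfold Rdiv. replace (K * r * ((X - Y) * / (K * r + 1)) * (K * r + 1)) with (K * r * (X - Y)) by (field; nra).
    assert (0 <= K * r) by nra. nra. }
  lra.
Qed.


Lemma tail_unif (alpha C0 l : R) (Ls : R -> R) (Lbn : nat -> R -> R) :
  1 < alpha -> 0 < C0 -> prob_tail Ls ->
  ImpInt (fun t => 2 * alpha * Rpower t (2 * alpha - 1) * Ls t) l ->
  (forall n, (1 <= n)%nat -> prob_tail (Lbn n)) ->
  (forall n, (1 <= n)%nat -> forall t, 0 <= t -> Lbn n t <= C0 * Ls t) ->
  forall e, 0 < e -> exists S, 1 <= S /\ forall n, (1 <= n)%nat -> forall T, S <= T ->
    RInt (fun s => s * Lbn n s) S T <= e.
Proof.
  intros Ha HC0 HLs [Hi Hl] HLb Hdom e He.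
  set (H := fun t => 2 * alpha * Rpower t (2 * alpha - 1) * Ls t).
  assert (HexH : forall T, 0 <= T -> ex_RInt H 0 T).
  { intros T HT. destruct (Hi T HT) as [pr]. apply ex_RInt_Reals_1. exact pr. }
  set (e' := e / (2 * C0)).
  assert (He' : 0 < e') by (unfold e'; apply Rdiv_lt_0_compat; lra).
  destruct (Hl e' He') as [M HM].
  exists (Rmax M 1). split. apply Rmax_r.
  intros n Hn T HT.
  set (S := Rmax M 1) in *.
  assert (HS1 : 1 <= S) by apply Rmax_r.
  assert (HSM : M <= S) by apply Rmax_l.
  destruct (HLb n Hn) as [HL1 [HL2 _]].
  destruct HLs as [HLs1 [HLs2 _]].
  assert (HIT := HM T ltac:(lra)). assert (HIS := HM S HSM).
  rewrite RI_RInt in HIT by (apply HexH; lra).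
  rewrite RI_RInt in HIS by (apply HexH; lra).
  apply Rabs_def2 in HIT. apply Rabs_def2 in HIS.
  assert (HCh : RInt H 0 S + RInt H S T = RInt H 0 T).
  { apply RIntR_Chasles. apply HexH; lra. apply exR_sub2 with 0. lra. apply HexH; lra. }
  assert (HexST : ex_RInt H S T) by (apply exR_sub2 with 0; [lra| apply HexH; lra]).
  apply Rle_trans with (RInt (fun s => C0 / (2 * alpha) * H s) S T).
  - apply RInt_le. auto. apply exR_sLb; auto; lra. apply exR_scal. auto.
    intros x Hx.
    assert (Hx0 : 0 < x) by lra.
    assert (Hpx : x <= Rpower x (2 * alpha - 1)).
    { rewrite <- (Rpower_1 x) at 1 by auto. apply Rle_Rpower; lra. }
    assert (Hb := HL1 x ltac:(lra)). assert (Hb2 := HLs1 x ltac:(lra)).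
    assert (Hd := Hdom n Hn x ltac:(lra)).
    cbv beta. unfold H. replace (C0 / (2 * alpha) * (2 * alpha * Rpower x (2 * alpha - 1) * Ls x))
      with (Rpower x (2 * alpha - 1) * (C0 * Ls x)) by (field; lra).
    apply Rmult_le_compat; lra.
  - rewrite RIntR_scal by auto.
    assert (RInt H S T <= 2 * e'). { unfold H in *. lra. }
    apply Rle_trans with (C0 / (2 * alpha) * (2 * e')).
    apply Rmult_le_compat_l. apply Rdiv_le_0_compat; lra. auto.
    unfold e'. replace (C0 / (2 * alpha) * (2 * (e / (2 * C0)))) with (e / (2 * alpha)) by (field; lra).
    apply Rmult_le_reg_r with (2 * alpha). lra. unfold Rdiv. rewrite Rmult_assoc, Rinv_l by lra. nra.
Qed.


Lemma cv_ext (u v : nat -> R) l : (forall n, u n = v n) -> Un_cv u l -> Un_cv v l.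
Proof. intros H Hu e He. destruct (Hu e He) as [N HN]. exists N. intros n Hn. rewrite <- H. auto. Qed.

Lemma cv_const c : Un_cv (fun _ => c) c.
Proof. intros e He. exists O. intros. unfold Rdist. rewrite Rminus_diag, Rabs_R0. lra. Qed.

Lemma cv_close u l : Un_cv u l -> forall e, 0 < e -> exists N, forall n, (N <= n)%nat -> Rabs (u n - l) < e.
Proof. intros H e He. destruct (H e He) as [N HN]. exists N. intros n Hn. apply HN. lia. Qed.

Lemma seq_to0 (gam x : nat -> R) L : Un_cv (fun n => gam n * x n) L -> cv_infty gam -> Un_cv x 0.
Proof.
  intros H Hg e He.
  destruct (H 1 ltac:(lra)) as [N1 HN1].
  destruct (Hg ((Rabs L + 1) / e)) as [N2 HN2].
  exists (Nat.max N1 N2). intros n Hn.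
  specialize (HN1 n ltac:(lia)). specialize (HN2 n ltac:(lia)).
  unfold Rdist in *. rewrite Rminus_0_r.
  assert (Hp : 0 < (Rabs L + 1) / e) by (apply Rdiv_lt_0_compat; [generalize (Rabs_pos L); lra|lra]).
  assert (Hgp : 0 < gam n) by lra.
  assert (Rabs (gam n * x n) < Rabs L + 1).
  { replace (gam n * x n) with ((gam n * x n - L) + L) by ring.
    eapply Rle_lt_trans. apply Rabs_triang. lra. }
  rewrite Rabs_mult, (Rabs_right (gam n)) in H0 by lra.
  apply Rmult_lt_reg_l with (gam n). auto.
  apply Rlt_trans with (Rabs L + 1). auto.
  apply Rmult_lt_reg_r with (/ e). apply Rinv_0_lt_compat; auto.
  rewrite Rmult_assoc, Rinv_r, Rmult_1_r by lra. exact HN2.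
Qed.


Lemma fsum_scal c k f : c * fsum k f = fsum k (fun j => c * f j).
Proof. induction k as [|k IH]; simpl. ring. rewrite <- IH. ring. Qed.

Lemma fsum_le k f g : (forall j, (j < k)%nat -> f j <= g j) -> fsum k f <= fsum k g.
Proof. induction k as [|k IH]; intros H; simpl. lra.
  apply Rplus_le_compat. apply IH. intros; apply H; lia. apply H; lia. Qed.

Lemma ind_gt_01 a b : 0 <= ind_gt a b <= 1.
Proof. unfold ind_gt. destruct (Rlt_dec b a); lra. Qed.

Lemma term_bound (lam r G t y : R) (Rs : R -> R) :
  0 <= lam -> 0 <= r -> 0 <= G -> 0 <= t -> 0 <= y ->
  ex_RInt Rs 0 t ->
  (forall u, 0 <= u -> exp (- (r * u)) * Rs u <= G) ->
  exp (- (r * t)) * (lam * ind_gt y t + lam * RI (fun s => Rs (t - s) * ind_gt y s) 0 t) <= lam * (1 + G * y).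
Proof.
  intros Hl Hr HG Ht Hy HRs Hb.
  assert (Hi : ex_RInt (fun s => Rs (t - s) * ind_gt y s) 0 t).
  { apply prod_mono. auto. apply exR_refl; auto.
    intros s u H1 H2 H3. unfold ind_gt. destruct (Rlt_dec u y); destruct (Rlt_dec s y); lra.
    intros; apply ind_gt_01. }
  rewrite RI_RInt by auto.
  assert (He1 : exp (- (r * t)) <= 1) by (apply exp_le1; nra).
  assert (He0 : 0 < exp (- (r * t))) by apply exp_pos.
  set (F := fun s => exp (- (r * t)) * (Rs (t - s) * ind_gt y s)).
  assert (HiF : ex_RInt F 0 t) by (apply exR_scal; auto).
  assert (HFe : exp (- (r * t)) * RInt (fun s => Rs (t - s) * ind_gt y s) 0 t = RInt F 0 t).
  { unfold F. rewrite RIntR_scal by auto. reflexivity. }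
  assert (HFp : forall s, 0 <= s <= t -> F s <= G * ind_gt y s).
  { intros s Hs. unfold F.
    assert (Hgs := Hb (t - s) ltac:(lra)).
    replace (exp (- (r * t)) * (Rs (t - s) * ind_gt y s)) with
      (ind_gt y s * (exp (- (r * s)) * (exp (- (r * (t - s))) * Rs (t - s)))).
    2: { replace (exp (- (r * t))) with (exp (- (r * s)) * exp (- (r * (t - s)))) by (rewrite <- exp_plus; f_equal; ring). ring. }
    assert (Hes : exp (- (r * s)) <= 1) by (apply exp_le1; nra).
    assert (Hes0 : 0 < exp (- (r * s))) by apply exp_pos.
    assert (exp (- (r * s)) * (exp (- (r * (t - s))) * Rs (t - s)) <= G).
    { destruct (Rle_dec 0 (exp (- (r * (t - s))) * Rs (t - s))).
      apply Rle_trans with (1 * (exp (- (r * (t - s))) * Rs (t - s))). apply Rmult_le_compat_r; lra. lra.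
      assert (exp (- (r * s)) * (exp (- (r * (t - s))) * Rs (t - s)) <= 0).
      { rewrite <- (Rmult_0_r (exp (- (r * s)))). apply Rmult_le_compat_l; lra. } lra. }
    rewrite (Rmult_comm G). apply Rmult_le_compat_l. apply ind_gt_01. auto. }
  assert (HRF : RInt F 0 t <= G * y).
  { destruct (Rle_dec t y).
    - apply Rle_trans with (RInt (fun _ => G) 0 t).
      apply RInt_le. auto. auto. apply exR_const. intros x Hx.
      apply Rle_trans with (G * ind_gt y x). apply HFp; lra.
      assert (H01 := ind_gt_01 y x). nra.
      rewrite RIntR_const. nra.
    - rewrite <- (RIntR_Chasles F 0 y t).
      2: { apply exR_sub1 with t. lra. auto. }
      2: { apply exR_sub2 with 0. lra. auto. }
      assert (RInt F 0 y <= RInt (fun _ => G) 0 y).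
      { apply RInt_le. auto. apply exR_sub1 with t. lra. auto. apply exR_const. intros x Hx.
        apply Rle_trans with (G * ind_gt y x). apply HFp; lra.
        assert (H01 := ind_gt_01 y x). nra. }
      assert (RInt F y t <= RInt (fun _ => 0) y t).
      { apply RInt_le. lra. apply exR_sub2 with 0. lra. auto. apply exR_const. intros x Hx.
        apply Rle_trans with (G * ind_gt y x). apply HFp; lra.
        unfold ind_gt. destruct (Rlt_dec x y). lra. lra. }
      rewrite RIntR_const in H, H0. lra. }
  assert (Hind := ind_gt_01 y t).
  replace (exp (- (r * t)) * (lam * ind_gt y t + lam * RInt (fun s => Rs (t - s) * ind_gt y s) 0 t))
    with (lam * (exp (- (r * t)) * ind_gt y t) + lam * (exp (- (r * t)) * RInt (fun s => Rs (t - s) * ind_gt y s) 0 t)) by ring.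
  rewrite HFe.
  assert (exp (- (r * t)) * ind_gt y t <= 1) by nra.
  assert (lam * (exp (- (r * t)) * ind_gt y t) <= lam * 1) by (apply Rmult_le_compat_l; lra).
  assert (lam * RInt F 0 t <= lam * (G * y)) by (apply Rmult_le_compat_l; lra).
  lra.
Qed.


Theorem lemma5p5
  (lam : nat -> R) (Lb : nat -> R -> R) (eta sig : nat -> R)
  (p q : nat -> nat -> R) (m : nat -> R) (gam : nat -> R) (gstar : R)
  (lamL etaL sigL b mlim : R) (psi phi : R -> R) (alpha beta : R)
  (Rs : nat -> R -> R)
  (* standing assumptions, n >= 1 *)
  (Hlam : forall n, (1 <= n)%nat -> 0 < lam n)
  (HLb : forall n, (1 <= n)%nat -> prob_tail (Lb n))
  (Heta : forall n, (1 <= n)%nat -> ImpInt (Lb n) (eta n))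
  (Hsig : forall n, (1 <= n)%nat -> ImpInt (fun t => t * Lb n t) (sig n))
  (Hp : forall n, (1 <= n)%nat -> prob_Zplus (p n))
  (Hq : forall n, (1 <= n)%nat -> prob_Zplus (q n))
  (Hm : forall n, (1 <= n)%nat -> infinite_sum (fun k => INR k * p n k) (m n))
  (Hgam_pos : forall n, (1 <= n)%nat -> 0 < gam n)
  (Hgam_inf : cv_infty gam)
  (Hgam_n : Un_cv (fun n => gam n / INR n) gstar)
  (Hgstar : 0 <= gstar)
  (* Condition 1 (i) *)
  (H1lam : Un_cv lam lamL) (H1lamp : 0 < lamL)
  (H1eta : Un_cv eta etaL) (H1etap : 0 < etaL)
  (H1sig : Un_cv sig sigL) (H1sigp : 0 < sigL)
  (H1b : Un_cv (fun n => gam n * (1 - lam n * eta n)) b)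
  (* Condition 1 (ii) *)
  (H1psi : forall K, 0 <= K -> forall eps, 0 < eps -> exists N, forall n, (N <= n)%nat ->
      forall z, 0 <= z <= K -> z <= INR n ->
      Rabs (psi_n (q n) (gam n) n z - psi z) < eps)
  (* Condition 1 (iii) *)
  (H1phiLip : forall K, 0 <= K -> exists L, forall n, (1 <= n)%nat ->
      forall z1 z2, 0 <= z1 <= K -> z1 <= INR n -> 0 <= z2 <= K -> z2 <= INR n ->
      Rabs (phi_n (p n) (gam n) n z1 - phi_n (p n) (gam n) n z2) <= L * Rabs (z1 - z2))
  (H1phi : forall K, 0 <= K -> forall eps, 0 < eps -> exists N, forall n, (N <= n)%nat ->
      forall z, 0 <= z <= K -> z <= INR n ->
      Rabs (phi_n (p n) (gam n) n z - phi z) < eps)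
  (H1phicont : forall z, 0 <= z -> forall eps, 0 < eps -> exists d, 0 < d /\
      forall z', 0 <= z' -> Rabs (z' - z) < d -> Rabs (phi z' - phi z) < eps)
  (* m := lim gam_n (1 - m^(n)) (exists under Condition 1) *)
  (Hmlim : Un_cv (fun n => gam n * (1 - m n)) mlim)
  (* Condition 2 *)
  (Halpha : 1 < alpha < 2)
  (H2a : exists C k0, 0 < C /\ (0 < k0)%nat /\
      forall n, (1 <= n)%nat -> forall N,
        INR n * gam n * fsum_range k0 N (fun k => Rpower (INR k / INR n) alpha * p n k)
        + fsum_range 1 N (fun k => Rpower (INR k) alpha * q n k) <= C)
  (H2b : forall eps, 0 < eps -> exists K1, forall k1, (K1 <= k1)%nat ->
      exists N, forall n, (N <= n)%nat -> forall M,
        gam n * fsum_range k1 M (fun k => INR k * p n k) <= eps)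
  (H2c : exists (C0 : R) (Ls : R -> R), 0 < C0 /\ prob_tail Ls /\
      (exists l, ImpInt (fun t => 2 * alpha * Rpower t (2 * alpha - 1) * Ls t) l) /\
      forall n, (1 <= n)%nat -> forall t, 0 <= t -> Lb n t <= C0 * Ls t)
  (* beta *)
  (Hbeta0 : 0 <= beta)
  (Hbeta : - (b + mlim) / (sigL * lamL) < beta)
  (* R^(n): the (unique) locally integrable solution of the renewal equation *)
  (HRs_int : forall n, (1 <= n)%nat -> forall T, 0 <= T ->
      inhabited (Riemann_integrable (Rs n) 0 T))
  (HRs_eq : forall n, (1 <= n)%nat -> forall t, 0 <= t ->
      Rs n t = lam n * m n * Lb n t
               + lam n * m n * RI (fun s => Rs n (t - s) * Lb n s) 0 t) :
  exists C, 0 < C /\ exists n0 : nat, (1 <= n0)%nat /\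
    forall k : nat, (1 <= k)%nat -> forall y : nat -> R, (forall j, (j < k)%nat -> 0 <= y j) ->
    forall n, (n0 <= n)%nat -> forall t, 0 <= t ->
      Rbeta_tky beta (gam n) (lam n) (Rs n) t k y <= C * fsum k (fun j => 1 + y j).
Proof.
  destruct H2c as [C0 [Ls [HC0 [HLs [[l Hl] Hdom]]]]].
  assert (Hm1 : Un_cv (fun n => 1 - m n) 0) by (apply (seq_to0 gam _ mlim); auto).
  assert (Hle1 : Un_cv (fun n => 1 - lam n * eta n) 0) by (apply (seq_to0 gam _ b); auto).
  assert (Hmcv : Un_cv m 1).
  { assert (H := CV_minus _ _ _ _ (cv_const 1) Hm1). rewrite Rminus_0_r in H.
    apply cv_ext with (2 := H). intros; simpl; ring. }
  assert (Hle : Un_cv (fun n => lam n * eta n) 1).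
  { assert (H := CV_minus _ _ _ _ (cv_const 1) Hle1). rewrite Rminus_0_r in H.
    apply cv_ext with (2 := H). intros; simpl; ring. }
  assert (HZ : Un_cv (fun n => gam n * (lam n * m n * eta n - 1)) (- (b + mlim))).
  { assert (H := CV_opp _ _ (CV_plus _ _ _ _ H1b (CV_mult _ _ _ _ Hle Hmlim))).
    rewrite Rmult_1_l in H. apply cv_ext with (2 := H). intros; unfold opp_seq; simpl; ring. }
  assert (HK : Un_cv (fun n => lam n * m n) lamL).
  { assert (H := CV_mult _ _ _ _ H1lam Hmcv). rewrite Rmult_1_r in H. exact H. }
  assert (HKs : Un_cv (fun n => lam n * m n * sig n) (lamL * sigL)).
  { exact (CV_mult _ _ _ _ HK H1sig). }
  assert (Hr : Un_cv (fun n => beta / gam n) 0).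
  { apply (seq_to0 gam _ beta); auto. intros e He. exists 1%nat. intros n Hn.
    unfold Rdist. assert (0 < gam n) by (apply Hgam_pos; lia).
    replace (gam n * (beta / gam n) - beta) with 0 by (field; lra). rewrite Rabs_R0. lra. }
  set (D := b + mlim + beta * lamL * sigL).
  assert (HD : 0 < D).
  { assert (Hpsl : 0 < sigL * lamL) by (apply Rmult_lt_0_compat; lra).
    apply Rmult_lt_compat_r with (r := sigL * lamL) in Hbeta; auto.
    unfold Rdiv in Hbeta. rewrite Rmult_assoc, Rinv_l in Hbeta by lra.
    unfold D. assert (beta * (sigL * lamL) = beta * lamL * sigL) by ring. lra. }
  set (Kmax := lamL + 1). set (smax := sigL + 1). set (G := 362 * Kmax).
  assert (HKmax : 0 < Kmax) by (unfold Kmax; lra).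
  assert (Hsmax : 0 < smax) by (unfold smax; lra).
  assert (HG : 0 <= G) by (unfold G; lra).
  set (del := D / (4 * (beta * Kmax + 1))).
  assert (Hdel : 0 < del) by (unfold del; apply Rdiv_lt_0_compat; nra).
  destruct (tail_unif alpha C0 l Ls Lb (proj1 Halpha) HC0 HLs Hl HLb Hdom del Hdel) as [S [HS1 Htail]].
  set (e1 := D / (4 * (beta + 1))).
  assert (He1 : 0 < e1) by (unfold e1; apply Rdiv_lt_0_compat; nra).
  set (X2 := beta * Kmax * S * smax).
  assert (HX2 : 0 <= X2) by (unfold X2; repeat apply Rmult_le_pos; lra).
  set (e2 := D / (4 * (X2 + 1))).
  assert (He2 : 0 < e2) by (unfold e2; apply Rdiv_lt_0_compat; nra).
  destruct (cv_close _ _ HK (Rmin (lamL / 2) 1)) as [NK HNK].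
  { apply Rmin_glb_lt; lra. }
  destruct (cv_close _ _ H1lam 1 ltac:(lra)) as [Nl HNl].
  destruct (cv_close _ _ HZ (D / 4) ltac:(lra)) as [NZ HNZ].
  destruct (cv_close _ _ HKs e1 He1) as [NKs HNKs].
  destruct (cv_close _ _ H1sig (Rmin 1 sigL)) as [Ns HNs].
  { apply Rmin_glb_lt; lra. }
  destruct (cv_close _ _ Hr e2 He2) as [Nr HNr].
  exists ((lamL + 1) * (1 + G)). split. nra.
  exists (Nat.max 1 (Nat.max NK (Nat.max Nl (Nat.max NZ (Nat.max NKs (Nat.max Ns Nr)))))).
  split. lia.
  intros k Hk y Hy n Hn t Ht.
  specialize (HNK n ltac:(lia)). specialize (HNl n ltac:(lia)). specialize (HNZ n ltac:(lia)).
  specialize (HNKs n ltac:(lia)). specialize (HNs n ltac:(lia)). specialize (HNr n ltac:(lia)).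
  assert (Hn1 : (1 <= n)%nat) by lia.
  assert (Hgn : 0 < gam n) by (apply Hgam_pos; auto).
  set (K := lam n * m n) in *.
  set (r := beta / gam n) in *.
  assert (HRmin1 := Rmin_l (lamL / 2) 1). assert (HRmin2 := Rmin_r (lamL / 2) 1).
  assert (HRmin3 := Rmin_l 1 sigL). assert (HRmin4 := Rmin_r 1 sigL).
  apply Rabs_def2 in HNK. apply Rabs_def2 in HNl. apply Rabs_def2 in HNZ.
  apply Rabs_def2 in HNKs. apply Rabs_def2 in HNs. apply Rabs_def2 in HNr.
  assert (HKpos : 0 < K) by lra.
  assert (HKle : K <= Kmax) by (unfold Kmax; lra).
  assert (Hlamle : lam n <= lamL + 1) by lra.
  assert (Hr0 : 0 <= r) by (unfold r; apply Rdiv_le_0_compat; lra).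
  assert (Hre : r <= e2) by lra.
  assert (Hsn0 : 0 <= sig n) by lra.
  assert (Hsn : sig n <= smax) by (unfold smax; lra).
  assert (Key : K * (eta n - r * sig n + r * r * S * sig n + r * del) <= 1).
  { assert (Heq : gam n * (K * (eta n - r * sig n + r * r * S * sig n + r * del) - 1) =
       gam n * (K * eta n - 1) - beta * (K * sig n) + beta * K * r * S * sig n + beta * K * del).
    { unfold r. field. lra. }
    assert (Hb1 : beta * (lamL * sigL) - beta * e1 <= beta * (K * sig n)).
    { rewrite <- Rmult_minus_distr_l. apply Rmult_le_compat_l; lra. }
    assert (Hb1' : beta * e1 <= D / 4).
    { apply Rle_trans with ((beta + 1) * e1). apply Rmult_le_compat_r; lra.
      right. unfold e1. field. lra. }
    assert (Hb2 : beta * K * r * S * sig n <= X2 * e2).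
    { assert (K * r <= Kmax * e2) by (apply Rmult_le_compat; lra).
      assert (K * r * sig n <= Kmax * e2 * smax) by (apply Rmult_le_compat; try lra; apply Rmult_le_pos; lra).
      assert (beta * S * (K * r * sig n) <= beta * S * (Kmax * e2 * smax)) by (apply Rmult_le_compat_l; nra).
      unfold X2. replace (beta * K * r * S * sig n) with (beta * S * (K * r * sig n)) by ring.
      replace (beta * Kmax * S * smax * e2) with (beta * S * (Kmax * e2 * smax)) by ring. lra. }
    assert (Hb2' : X2 * e2 <= D / 4).
    { apply Rle_trans with ((X2 + 1) * e2). apply Rmult_le_compat_r; lra.
      right. unfold e2. field. lra. }
    assert (Hb3 : beta * K * del <= D / 4).
    { apply Rle_trans with ((beta * Kmax + 1) * del).
      replace (beta * K * del) with ((beta * K) * del) by ring.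
      apply Rmult_le_compat_r. lra. assert (beta * K <= beta * Kmax) by (apply Rmult_le_compat_l; lra). lra.
      right. unfold del. field. nra. }
    assert (Hneg : gam n * (K * (eta n - r * sig n + r * r * S * sig n + r * del) - 1) <= 0).
    { rewrite Heq. unfold D in *. lra. }
    apply Rnot_lt_le. intro Hc.
    assert (0 < gam n * (K * (eta n - r * sig n + r * r * S * sig n + r * del) - 1)) by (apply Rmult_lt_0_compat; lra).
    lra. }
  assert (HB := int_bound_n K r (eta n) (sig n) S del (Lb n) HKpos Hr0 ltac:(lra) (HLb n Hn1) (Heta n Hn1) (Hsig n Hn1) (Htail n Hn1)).
  assert (Hg := tilt_bound K r (Lb n) (Rs n) HKpos Hr0 (HLb n Hn1) (HRs_int n Hn1) (HRs_eq n Hn1)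
                  (fun T HT => Rle_trans _ _ _ (HB T HT) Key)).
  assert (HgG : forall u, 0 <= u -> exp (- (r * u)) * Rs n u <= G).
  { intros u Hu. apply Rle_trans with (362 * K). apply Hg; auto. unfold G. lra. }
  assert (HRst : ex_RInt (Rs n) 0 t).
  { destruct (HRs_int n Hn1 t Ht) as [pr]. apply ex_RInt_Reals_1. exact pr. }
  unfold Rbeta_tky, Rtky.
  replace (- beta * t / gam n) with (- (r * t)) by (unfold r; field; lra).
  rewrite fsum_scal.
  apply Rle_trans with (fsum k (fun j => lam n * (1 + G * y j))).
  { apply fsum_le. intros j Hj. assert (0 < lam n) by (apply Hlam; auto). apply term_bound; auto; lra. }
  rewrite fsum_scal. apply fsum_le. intros j Hj.
  assert (Hyj := Hy j Hj).
  assert (lam n * (1 + G * y j) <= (lamL + 1) * (1 + G * y j)) by (apply Rmult_le_compat_r; nra).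
  assert (1 + G * y j <= (1 + G) * (1 + y j)) by nra.
  assert ((lamL + 1) * (1 + G * y j) <= (lamL + 1) * ((1 + G) * (1 + y j))) by (apply Rmult_le_compat_l; lra).
  lra.
Qed.
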